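(* Let $\alpha,\beta$ be relatively prime positive integers, and let $n$ be a positive integer with $s=s(n)>2$. Then there exist unique integers $a,b,t$ satisfying the following: (i) $n=a g_t+\beta b g_{t-1}$; (ii) $t\ge 2$, $a\le (\beta-1)g_{t+1}+\alpha b$, and $b\le g_t$; (iii) $a-\alpha b-\ell g_{t+1}$ is not a positive multiple of $\beta$ for any integer $\ell\ge 0$. Further, for these integers: (1) the pair $(b,a)$ is $n$-good and $s=t+1$; (2) $|w_{s+1}(b,a)-\gamma n|=|\lambda^t(\gamma b-a)|\le 2\beta^{t+1}$; (3) a pair $(b',a')$ of positive integers is $n$-good if and only if $(b',a')=(b+k g_t,\ a-k\beta g_{t-1})$ for some integer $k\ge 0$; (4) with $a',b',k$ as in (3), $w_{s+1}(b',a')-w_{s+1}(b,a)=-k(-\beta)^{t}$.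
   Context: Fix relatively prime positive integers $\alpha,\beta$. For positive integers $a_1,a_2$, the $(\alpha,\beta)$-walk $w_k=w_k(a_1,a_2)$ is the sequence with $w_1=a_1$, $w_2=a_2$, and $w_{k+2}=\alpha w_{k+1}+\beta w_k$ for $k\ge1$. For a positive integer $n$, $s(n;a_1,a_2)$ is the (largest) index $s$ with $w_s(a_1,a_2)=n$, or $-\infty$ if there is none, and $s(n)=\max_{a_1,a_2\ge1}s(n;a_1,a_2)$. A pair $(a_1,a_2)$ with $a_1,a_2\ge1$ is called $n$-good if $s(n;a_1,a_2)=s(n)$. The sequence $g_k$ is defined by $g_1=1$, $g_2=\alpha$, $g_{k+2}=\alpha g_{k+1}+\beta g_k$ for $k\ge1$. Let $\gamma=\frac12(\alpha+\sqrt{\alpha^2+4\beta})$ and $\lambda=\frac12(\alpha-\sqrt{\alpha^2+4\beta})$. *)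

(* Defs.v *)
From mathcomp Require Import all_boot all_order all_algebra.
Set Implicit Arguments. Unset Strict Implicit. Unset Printing Implicit Defensive.
Import Order.TTheory GRing.Theory Num.Theory.
Local Open Scope ring_scope.

(* Pairs (w_{k+1}, w_{k+2}) of the (alpha,beta)-walk started at (a1,a2). *)
Fixpoint wpair (al be : nat) (a1 a2 : int) (k : nat) : int * int :=
  match k with
  | 0%N => (a1, a2)
  | k'.+1 => let p := wpair al be a1 a2 k' in
             (p.2, al%:Z * p.2 + be%:Z * p.1)
  end.

(* walk al be a1 a2 k = w_k(a1,a2); indices k >= 1 are the meaningful ones
   (w_1 = a1, w_2 = a2, w_{k+2} = al w_{k+1} + be w_k). *)
Definition walk (al be : nat) (a1 a2 : int) (k : nat) : int :=
  (wpair al be a1 a2 k.-1).1.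

Definition gseq (al be : nat) (k : nat) : int := walk al be 1 al%:Z k.

Definition is_walk_index (al be n : nat) (a1 a2 : int) (s : nat) : Prop :=
  (0 < s)%N /\ walk al be a1 a2 s = n%:Z /\
  forall k : nat, (0 < k)%N -> walk al be a1 a2 k = n%:Z -> (k <= s)%N.

Definition is_sn (al be n : nat) (s : nat) : Prop :=
  (exists a1 a2 : int, 0 < a1 /\ 0 < a2 /\ is_walk_index al be n a1 a2 s) /\
  forall (a1 a2 : int) (s' : nat), 0 < a1 -> 0 < a2 ->
    is_walk_index al be n a1 a2 s' -> (s' <= s)%N.

Definition n_good (al be n : nat) (a1 a2 : int) : Prop :=
  0 < a1 /\ 0 < a2 /\
  exists s : nat, is_sn al be n s /\ is_walk_index al be n a1 a2 s.

(* Main.v *)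
Require Import Defs.
From mathcomp Require Import all_boot all_order all_algebra.
From mathcomp Require Import ring lra zify.
Import Order.TTheory GRing.Theory Num.Theory.
Local Open Scope ring_scope.

Definition G (al be : nat) (k : nat) : int := (wpair al be 0 1 k).1.

Lemma wpair_shift al be x y i j : wpair al be x y (i + j)%N =
  wpair al be (wpair al be x y i).1 (wpair al be x y i).2 j.
Proof.
elim: j => [|j IH]; first by rewrite addn0; case: (wpair _ _ _ _ i).
by rewrite addnS /= IH.
Qed.

Lemma wpair_lin al be x y k : wpair al be x y k =
  (x * (wpair al be 1 0 k).1 + y * (wpair al be 0 1 k).1,
   x * (wpair al be 1 0 k).2 + y * (wpair al be 0 1 k).2).
Proof.
elim: k => [|k IH]; first by rewrite /= !mulr1 !mulr0 addr0 add0r.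
rewrite /= IH /=; congr pair; ring.
Qed.

Lemma GSS al be k : G al be k.+2 = al%:Z * G al be k.+1 + be%:Z * G al be k.
Proof. by []. Qed.

Lemma G0 al be : G al be 0 = 0. Proof. by []. Qed.
Lemma G1 al be : G al be 1 = 1. Proof. by []. Qed.

Lemma U_G al be k : (wpair al be 1 0 k.+1).1 = be%:Z * G al be k.
Proof.
have -> : k.+1 = (1 + k)%N by [].
rewrite wpair_shift.
have -> : wpair al be 1 0 1 = (0, be%:Z) by rewrite /=; congr pair; ring.
rewrite wpair_lin /=; ring.
Qed.

Lemma walkSS al be x y k :
  walk al be x y k.+2 = y * G al be k.+1 + be%:Z * x * G al be k.
Proof.
rewrite /walk /= wpair_lin /=; have h := U_G al be k; rewrite /= in h; rewrite h /G /=; ring.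
Qed.

Lemma gseqE al be k : gseq al be k.+1 = G al be k.+1.
Proof.
rewrite /gseq /walk /= /G.
have -> : k.+1 = (1 + k)%N by [].
rewrite wpair_shift.
by have -> : wpair al be 0 1 1 = (1, al%:Z) by rewrite /=; congr pair; ring.
Qed.

Lemma wpair_pos al be (x y : int) j : (0 < al)%N -> 0 < x -> 0 < y ->
  0 < (wpair al be x y j).1 /\ 0 < (wpair al be x y j).2.
Proof.
move=> hal hx hy; elim: j => [|j [IH1 IH2]] //=; split => //.
have h1 : 0 < al%:Z * (wpair al be x y j).2 by rewrite mulr_gt0 // ltz_nat.
have h2 : 0 <= be%:Z * (wpair al be x y j).1 by rewrite mulr_ge0 // ltW.
lra.
Qed.

Lemma wpair_lt al be (x y : int) j : (0 < al)%N -> (0 < be)%N -> 0 < x -> 0 < y ->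
  (wpair al be x y j.+1).1 < (wpair al be x y j.+1).2.
Proof.
move=> hal hbe hx hy; have [p1 p2] := wpair_pos al be x y j hal hx hy.
rewrite /=.
have h1 : (wpair al be x y j).2 <= al%:Z * (wpair al be x y j).2.
  have hal' : 1 <= al%:Z by rewrite lez_nat.
  nra.
have h2 : 0 < be%:Z * (wpair al be x y j).1 by rewrite mulr_gt0 // ltz_nat.
lra.
Qed.

Lemma walk_S al be (x y : int) j : (0 < al)%N -> (0 < be)%N -> 0 < x -> 0 < y ->
  walk al be x y j.+2 < walk al be x y j.+3.
Proof.
move=> hal hbe hx hy.
change ((wpair al be x y j.+1).1 < (wpair al be x y j.+1).2).
exact: wpair_lt.
Qed.

Lemma walk_lt al be (x y : int) i d : (0 < al)%N -> (0 < be)%N -> 0 < x -> 0 < y ->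
  walk al be x y i.+2 < walk al be x y (i.+2 + d.+1).
Proof.
move=> hal hbe hx hy; elim: d => [|d IH].
  by rewrite addn1; apply: walk_S.
apply: (lt_trans IH).
have -> : (i.+2 + d.+2 = (i + d.+1).+3)%N by rewrite !addSn addnS.
have -> : (i.+2 + d.+1 = (i + d.+1).+2)%N by rewrite !addSn.
exact: walk_S.
Qed.

Lemma walk_pos al be (x y : int) k : (0 < al)%N -> 0 < x -> 0 < y -> 0 < walk al be x y k.
Proof. by move=> hal hx hy; rewrite /walk; case: (wpair_pos al be x y k.-1 hal hx hy). Qed.

Lemma G_pos al be k : (0 < al)%N -> 0 < G al be k.+1.
Proof. by move=> hal; rewrite -gseqE /gseq; apply: walk_pos => //; rewrite ltz_nat. Qed.

Lemma G_ge0 al be k : (0 < al)%N -> 0 <= G al be k.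
Proof. by move=> hal; case: k => [|k] //; apply/ltW/G_pos. Qed.

Lemma G_coprime al be k : (0 < al)%N -> coprime al be ->
  coprimez (G al be k.+1) be%:Z /\ coprimez (G al be k.+1) (G al be k.+2).
Proof.
move=> hal hco.
have e : forall j, (`|G al be j|%N)%:Z = G al be j by move=> j; rewrite gez0_abs // G_ge0.
have eS : forall j, (`|G al be j.+2| = al * `|G al be j.+1| + be * `|G al be j|)%N.
  by move=> j; apply/eqP; rewrite -eqz_nat PoszD !PoszM !e GSS.
rewrite !coprimezE absz_nat.
elim: k => [|k [IH1 IH2]].
  have -> : absz (G al be 1) = 1%N by rewrite G1.
  by split; apply: coprime1n.
have C1 : coprime `|G al be k.+2| be.
  rewrite eS coprime_sym /coprime addnC [(be * _)%N]mulnC gcdnMDl.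
  by rewrite -[_ == 1%N]/(coprime _ _) coprimeMr coprime_sym hco coprime_sym IH1.
split => //.
rewrite (eS k.+1) /coprime gcdnMDl -[_ == 1%N]/(coprime _ _) coprimeMr.
by rewrite C1 coprime_sym IH2.
Qed.

Lemma cassini al be u :
  G al be u.+1 ^+ 2 - G al be u * G al be u.+2 = (- be%:Z) ^+ u.
Proof.
elim: u => [|u IH]; first by rewrite /= expr0 mul0r subr0 expr1n.
rewrite [(- _) ^+ _.+1]exprS -IH !GSS; ring.
Qed.

Lemma walk_shift al be (x y : int) d m : walk al be x y (d + m.+1) =
  walk al be (wpair al be x y d).1 (wpair al be x y d).2 m.+1.
Proof. by rewrite /walk addnS /= wpair_shift. Qed.

Lemma no_higher al be (n : nat) m : (0 < al)%N ->
  (forall x y : int, 0 < x -> 0 < y -> walk al be x y m.+1 <> n%:Z) ->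
  forall (x y : int) k, 0 < x -> 0 < y -> (m.+1 <= k)%N -> walk al be x y k <> n%:Z.
Proof.
move=> hal H x y k hx hy hk.
rewrite -(subnK hk) walk_shift.
have [p1 p2] := wpair_pos al be x y (k - m.+1) hal hx hy.
exact: H.
Qed.

Lemma iwi al be (n : nat) (x y : int) m : (0 < al)%N -> 0 < x -> 0 < y ->
  walk al be x y m.+1 = n%:Z ->
  (forall x y : int, 0 < x -> 0 < y -> walk al be x y m.+2 <> n%:Z) ->
  is_walk_index al be n x y m.+1.
Proof.
move=> hal hx hy hw H; split => //; split => // k hk hwk.
rewrite leqNgt; apply/negP => hlt.
exact: (no_higher _ _ _ _ hal H _ _ _ hx hy hlt hwk).
Qed.

Lemma iwi_max al be (n : nat) (x y : int) j : (0 < al)%N -> (0 < be)%N -> 0 < x -> 0 < y ->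
  walk al be x y j.+2 = n%:Z -> is_walk_index al be n x y j.+2.
Proof.
move=> hal hbe hx hy hw; split => //; split => // k hk hwk.
rewrite leqNgt; apply/negP => hlt.
have := walk_lt al be x y j (k - j.+3) hal hbe hx hy.
rewrite -addSnnS subnKC // hw hwk ltxx //.
Qed.

Lemma sn_uniq al be n s s' : is_sn al be n s -> is_sn al be n s' -> s = s'.
Proof.
move=> [[a1 [a2 [h1 [h2 hw]]]] H] [[b1 [b2 [k1 [k2 kw]]]] K].
apply/eqP; rewrite eqn_leq (K _ _ _ h1 h2 hw) (H _ _ _ k1 k2 kw) //.
Qed.

Lemma sn_nosol al be (n : nat) s : (0 < al)%N -> (0 < be)%N -> (0 < s)%N ->
  is_sn al be n s -> forall x y : int, 0 < x -> 0 < y -> walk al be x y s.+1 <> n%:Z.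
Proof.
move=> hal hbe hs [_ H] x y hx hy hw.
case: s hs H hw => [|s] // _ H hw.
have := H _ _ _ hx hy (iwi_max _ _ _ _ _ _ hal hbe hx hy hw).
by rewrite ltnn.
Qed.

Lemma iii_nosol al be (n : nat) (a b : int) v : (0 < al)%N -> coprime al be ->
  0 < b -> b <= G al be v.+1 -> n%:Z = a * G al be v.+1 + be%:Z * b * G al be v ->
  (forall l : nat, ~ (exists m : int, 0 < m /\ a - al%:Z * b - l%:Z * G al be v.+2 = be%:Z * m)) ->
  forall x y : int, 0 < x -> 0 < y -> walk al be x y v.+3 <> n%:Z.
Proof.
move=> hal hco hb hbG hn H x y hx hy; rewrite walkSS => hw.
have [_ cop] := G_coprime al be v hal hco.
have G1p := G_pos al be v hal.
set G0 := G al be v in hn hw *; set G1 := G al be v.+1 in hn hw cop hbG G1p *.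
set G2 := G al be v.+2 in hw cop *.
have E : (y - b) * G2 = G1 * (a - al%:Z * b - be%:Z * x).
  apply/eqP; rewrite -subr_eq0.
  have -> : (y - b) * G2 - G1 * (a - al%:Z * b - be%:Z * x) =
     (y * G2 + be%:Z * x * G1) - (a * G1 + be%:Z * b * G0) by rewrite /G2 GSS -/G1 -/G0; ring.
  by rewrite hw hn subrr.
have : (G1 %| (y - b) * G2)%Z by rewrite E dvdz_mulr.
rewrite Gauss_dvdzl // => /dvdzP [j hj].
have j0 : 0 <= j by nia.
apply: (H `|j|%N); exists x; split => //.
rewrite gez0_abs //.
apply: (mulfI (lt0r_neq0 G1p)).
apply/eqP; rewrite -subr_eq0.
have -> : G1 * (a - al%:Z * b - j * G2) - G1 * (be%:Z * x) =
  G1 * (a - al%:Z * b - be%:Z * x) - (y - b) * G2 + (y - b - j * G1) * G2 by ring.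
by rewrite -E subrr add0r hj subrr mul0r.
Qed.

Lemma cong_b al be (a b a' b' : int) u : (0 < al)%N -> coprime al be ->
  a * G al be u.+1 + be%:Z * b * G al be u = a' * G al be u.+1 + be%:Z * b' * G al be u ->
  exists j : int, b' - b = j * G al be u.+1 /\ a' = a - j * be%:Z * G al be u.
Proof.
move=> hal hco he.
have [cb _] := G_coprime al be u hal hco.
have cG : coprimez (G al be u.+1) (G al be u).
  case: u he {cb} => [|v] _; first by rewrite G1.
  by have [_ c] := G_coprime al be v hal hco; rewrite coprimez_sym.
have G1p := G_pos al be u hal.
set G0 := G al be u in he cG *; set G1 := G al be u.+1 in he cG cb G1p *.
have E : be%:Z * G0 * (b' - b) = G1 * (a - a').
  apply/eqP; rewrite -subr_eq0.
  have -> : be%:Z * G0 * (b' - b) - G1 * (a - a') =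
     (a' * G1 + be%:Z * b' * G0) - (a * G1 + be%:Z * b * G0) by ring.
  by rewrite he subrr.
have : (G1 %| be%:Z * G0 * (b' - b))%Z by rewrite E dvdz_mulr.
rewrite Gauss_dvdzr ?coprimezMr ?cb ?cG // => /dvdzP [j hj].
exists j; split => //.
apply: (mulfI (lt0r_neq0 G1p)).
apply/eqP; rewrite -subr_eq0.
have -> : G1 * a' - G1 * (a - j * be%:Z * G0) = - (G1 * (a - a')) + be%:Z * G0 * (j * G1) by ring.
by rewrite -E -hj addrC subrr.
Qed.

Lemma bound_a al be (a b : int) u : (0 < al)%N -> (0 < be)%N -> coprime al be ->
  (forall l : nat, ~ (exists m : int, 0 < m /\ a - al%:Z * b - l%:Z * G al be u.+2 = be%:Z * m)) ->
  a <= (be%:Z - 1) * G al be u.+2 + al%:Z * b.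
Proof.
move=> hal hbe hco H; rewrite leNgt; apply/negP => hlt.
have [cb _] := G_coprime al be u.+1 hal hco.
have G2p := G_pos al be u.+1 hal.
set G2 := G al be u.+2 in H hlt cb G2p.
have [u0 [v0 huv]] := Bezoutz G2 be%:Z.
move: cb; rewrite /coprimez => /eqP cb; rewrite cb in huv.
set c := a - al%:Z * b.
have be0 : be%:Z != 0 by rewrite eqz_nat -lt0n.
have hbe' : 0 < be%:Z by rewrite ltz_nat.
have hdiv := divz_eq (c * u0) be%:Z.
set q := ((c * u0) %/ be%:Z)%Z in hdiv; set l := ((c * u0) %% be%:Z)%Z in hdiv.
have l0 : 0 <= l by apply: modz_ge0.
have l1 : l < be%:Z by have := ltz_mod (c * u0) be0; rewrite ger0_norm // ltW.
apply: (H `|l|%N); exists (c * v0 + q * G2); rewrite gez0_abs //.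
have E : c - l * G2 = be%:Z * (c * v0 + q * G2).
  have -> : l = c * u0 - q * be%:Z by rewrite {1}hdiv; ring.
  have -> : c - (c * u0 - q * be%:Z) * G2 = c * (1 - u0 * G2) + q * be%:Z * G2 by ring.
  have -> : 1 - u0 * G2 = v0 * be%:Z by rewrite -huv; ring.
  ring.
split; last by rewrite -E.
have : 0 < c - l * G2 by rewrite /c; nia.
rewrite E => h; rewrite pmulr_rgt0 // in h.
Qed.
Lemma real_part (R : rcfType) (al be n : nat) (a b : int) u :
  (0 < al)%N -> (0 < be)%N -> 0 < a -> 0 < b -> b <= G al be u.+1 ->
  a <= (be%:Z - 1) * G al be u.+2 + al%:Z * b ->
  n%:Z = a * G al be u.+1 + be%:Z * b * G al be u ->
  let gam : R := (al%:R + Num.sqrt ((al ^ 2 + 4 * be)%:R)) / 2 in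
  let lam : R := (al%:R - Num.sqrt ((al ^ 2 + 4 * be)%:R)) / 2 in
  `|(walk al be b a u.+3)%:~R - gam * n%:R| = `|lam ^+ u.+1 * (gam * b%:~R - a%:~R)| /\
  `|lam ^+ u.+1 * (gam * b%:~R - a%:~R)| <= 2 * be%:R ^+ u.+2.
Proof.
move=> hal hbe ha hb hbG haB hn.
cbv zeta.
set r := Num.sqrt _.
set gam := (al%:R + r) / 2; set lam := (al%:R - r) / 2.
have r0 : 0 <= r := sqrtr_ge0 _.
have r2 : r ^+ 2 = al%:R ^+ 2 + 4 * be%:R.
  by rewrite sqr_sqrtr ?ler0n // natrD natrM natrX.
have al0 : 0 <= al%:R :> R := ler0n _ _.
have be1 : 1 <= be%:R :> R by rewrite ler1n.
have ralr : al%:R <= r by nra.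
have rp : 0 < r by nra.
have hsum : gam + lam = al%:R by rewrite /gam /lam; field.
have hdif : gam - lam = r by rewrite /gam /lam; field.
have hprod : gam * lam = - be%:R.
  rewrite /gam /lam; have -> : (al%:R + r) / 2 * ((al%:R - r) / 2) = (al%:R ^+ 2 - r ^+ 2) / 4 :> R by field.
  by rewrite r2; field.
pose g k : R := (G al be k)%:~R.
have gSS : forall k, g k.+2 = al%:R * g k.+1 + be%:R * g k.
  by move=> k; rewrite /g GSS intrD !intrM.
have g0 : g 0 = 0 by rewrite /g G0.
have g1 : g 1 = 1 by rewrite /g G1.
have ident : forall k, g k.+1 - gam * g k = lam ^+ k.
  elim=> [|k IH]; first by rewrite g1 g0 mulr0 subr0 expr0.
  rewrite exprS -IH gSS -hsum.
  have -> : be%:R = - (gam * lam) :> R by rewrite hprod opprK.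
  ring.
have binet : forall k, r * g k = gam ^+ k - lam ^+ k.
  elim=> [|k IH]; first by rewrite g0 mulr0 !expr0 subrr.
  have -> : g k.+1 = gam * g k + lam ^+ k by rewrite -(ident k); ring.
  rewrite !exprS mulrDr mulrA [r * gam]mulrC -mulrA IH -hdif; ring.
have gge0 : forall k, 0 <= g k by move=> k; rewrite /g ler0z G_ge0.
set A : R := a%:~R; set B : R := b%:~R.
have hw : (walk al be b a u.+3)%:~R = A * g u.+2 + be%:R * B * g u.+1.
  by rewrite walkSS intrD !intrM.
have hnR : n%:R = A * g u.+1 + be%:R * B * g u :> R.
  by rewrite pmulrn hn intrD !intrM.
split.
  rewrite hw hnR.
  have -> : g u.+2 = gam * g u.+1 + lam ^+ u.+1 by rewrite -(ident u.+1); ring.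
  have -> : g u.+1 = gam * g u + lam ^+ u by rewrite -(ident u); ring.
  have -> : be%:R = - (gam * lam) :> R by rewrite hprod opprK.
  rewrite -normrN; congr `|_|; rewrite exprS; ring.
have lam0 : lam <= 0 by rewrite /lam; lra.
have nl : `|lam| = - lam by rewrite ler0_norm.
have lg : - lam <= gam by lra.
have lgb : (- lam) * gam = be%:R by rewrite mulNr mulrC hprod opprK.
have l2 : (- lam) * (- lam) <= be%:R by nra.
set P := (- lam) ^+ u.+1; set Q := gam ^+ u.+1; set M := lam ^+ u.+1; set E := be%:R ^+ u.+1 : R.
have P0 : 0 <= P by rewrite /P exprn_ge0 // oppr_ge0.
have Q0 : 0 <= Q by rewrite /Q exprn_ge0 // (le_trans _ lg) // oppr_ge0.
have PQ : P * Q = E by rewrite /P /Q /E -exprMn lgb.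
have PP : P * P <= E by rewrite /P /E -exprMn lerXn2r // ?nnegrE ?mulr_ge0 // ?oppr_ge0 // ler0n.
have nM : `|M| = P by rewrite /M normrX nl.
have M1 : M <= P by rewrite -nM ler_norm.
have M2 : - M <= P by rewrite -nM -normrN ler_norm.
have E0 : 0 <= E by rewrite /E exprn_ge0 // ler0n.
have K1 : r * (P * g u.+1) <= 2 * E.
  have -> : r * (P * g u.+1) = P * (r * g u.+1) by ring.
  rewrite binet -/Q -/M; nra.
have PM : P * M <= E by nra.
have K2 : P * g u.+2 <= E.
  have : r * (P * g u.+2) <= r * E.
    have -> : r * (P * g u.+2) = P * (r * g u.+2) by ring.
    rewrite binet [gam ^+ _.+2]exprS [lam ^+ _.+2]exprS -/Q -/M -hdif.
    have h1 : (- lam) * (P * M) <= (- lam) * E by rewrite ler_wpM2l // oppr_ge0.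
    have -> : P * (gam * Q - lam * M) = (P * Q) * gam + (- lam) * (P * M) by ring.
    rewrite PQ; lra.
  by rewrite ler_pM2l.
have B0 : 0 <= B by rewrite /B ler0z ltW.
have A0 : 0 <= A by rewrite /A ler0z ltW.
have BG : B <= g u.+1 by rewrite /B /g ler_int.
have AB : A <= (be%:R - 1) * g u.+2 + al%:R * B.
  by move: haB; rewrite -(ler_int R) intrD !intrM intrB.
have gal : al%:R * g u.+1 <= g u.+2.
  rewrite gSS; have := gge0 u; have : 0 <= be%:R :> R := ler0n _ _; nra.
have gr : gam <= r by rewrite /gam; lra.
rewrite normrM normrX nl -/P exprS -/E.
have gg := gge0 u.+1; have gg2 := gge0 u.+2.
case: (lerP A (gam * B)) => hAB.
  have h1 : gam * B - A <= r * g u.+1 by nra.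
  have h2 : P * (gam * B - A) <= P * (r * g u.+1) by rewrite ler_wpM2l.
  nra.
have h1 : A - gam * B <= be%:R * g u.+2 by nra.
have h2 : P * (A - gam * B) <= P * (be%:R * g u.+2) by rewrite ler_wpM2l.
nra.
Qed.

Theorem theorem1p1 (R : rcfType) (al be n s : nat) :
  (0 < al)%N -> (0 < be)%N -> coprime al be -> (0 < n)%N ->
  is_sn al be n s -> (2 < s)%N ->
  let g := gseq al be in
  let w := walk al be in
  let gam : R := (al%:R + Num.sqrt ((al ^ 2 + 4 * be)%:R)) / 2 in
  let lam : R := (al%:R - Num.sqrt ((al ^ 2 + 4 * be)%:R)) / 2 in
  let P := fun (a b : int) (t : nat) =>
    [/\ 0 < a, 0 < b,
        n%:Z = a * g t + be%:Z * b * g t.-1,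
        [/\ (2 <= t)%N, a <= (be%:Z - 1) * g t.+1 + al%:Z * b & b <= g t]
      & forall l : nat, ~ (exists m : int,
          0 < m /\ a - al%:Z * b - l%:Z * g t.+1 = be%:Z * m)] in
  exists (a b : int) (t : nat),
    P a b t /\
    (forall (a' b' : int) (t' : nat), P a' b' t' -> [/\ a' = a, b' = b & t' = t]) /\
    (* (1) *)
    (n_good al be n b a /\ s = t.+1) /\
    (* (2) *)
    (`|(w b a s.+1)%:~R - gam * n%:R| = `|lam ^+ t * (gam * b%:~R - a%:~R)| /\
     `|lam ^+ t * (gam * b%:~R - a%:~R)| <= 2 * be%:R ^+ t.+1) /\
    (* (3) *)
    (forall b' a' : int, 0 < b' -> 0 < a' ->
       (n_good al be n b' a' <->
        exists k : nat, b' = b + k%:Z * g t /\ a' = a - k%:Z * be%:Z * g t.-1)) /\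
    (* (4) *)
    (forall (b' a' : int) (k : nat), 0 < b' -> 0 < a' ->
       b' = b + k%:Z * g t -> a' = a - k%:Z * be%:Z * g t.-1 ->
       w b' a' s.+1 - w b a s.+1 = - (k%:Z * (- be%:Z) ^+ t)).
Proof.
move=> hal hbe hco hn0 hsn hs.
cbv beta zeta.
case: s hsn hs => [|[|[|v]]] // hsn _.
have NoS := sn_nosol al be n v.+3 hal hbe (ltn0Sn _) hsn.
have Gtp := G_pos al be v.+1 hal.
have G1p := G_pos al be v hal.
have G3p := G_pos al be v.+2 hal.
have be0 : 0 < be%:Z by rewrite ltz_nat.
set G1 := G al be v.+1 in G1p *; set Gt := G al be v.+2 in Gtp *.
set G3 := G al be v.+3 in G3p *.
have [[a1 [a2 [h1 [h2 [_ [hw1 _]]]]]] _] := hsn.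
have hw0 := hw1.
rewrite walkSS -/G1 -/Gt in hw1.
have Gt0 : Gt != 0 by rewrite lt0r_neq0.
have hdiv := divz_eq (a1 - 1) Gt.
set q := ((a1 - 1) %/ Gt)%Z in hdiv; set rr := ((a1 - 1) %% Gt)%Z in hdiv.
have rr0 : 0 <= rr by apply: modz_ge0.
have rr1 : rr < Gt by have := ltz_mod (a1 - 1) Gt0; rewrite ger0_norm // ltW.
have q0 : 0 <= q by rewrite divz_ge0 // subr_ge0.
set b := rr + 1; set a := a2 + q * be%:Z * G1.
have hb : 0 < b by rewrite /b; lia.
have hbG : b <= Gt by rewrite /b; lia.
have ha : 0 < a by rewrite /a; nia.
have hnab : n%:Z = a * Gt + be%:Z * b * G1.
  rewrite -hw1 /a /b.
  have -> : a1 = q * Gt + rr + 1 by rewrite -hdiv; ring.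
  ring.
have hiii : forall l : nat, ~ (exists m : int,
          0 < m /\ a - al%:Z * b - l%:Z * G3 = be%:Z * m).
  move=> l [m [m0 hm]].
  apply: (NoS m (b + l%:Z * Gt)) => //; first by nia.
  rewrite walkSS -/Gt -/G3 hnab.
  have e3 : G3 = al%:Z * Gt + be%:Z * G1 by rewrite /G3 GSS.
  have -> : be%:Z * m * Gt = (a - al%:Z * b - l%:Z * G3) * Gt by rewrite hm; ring.
  rewrite e3; ring.
have hba := bound_a al be a b v.+1 hal hbe hco hiii.
rewrite -/G3 in hba.
have NoSl : forall x y : int, 0 < x -> 0 < y -> walk al be x y v.+4 <> n%:Z by [].
have hiw : is_walk_index al be n b a v.+3.
  apply: iwi => //; by rewrite walkSS -/G1 -/Gt hnab; ring.
exists a, b, v.+2.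
rewrite !gseqE /= -/G1 -/Gt -/G3.
split.
  by split => //; split.
split.
  move=> a' b' [|[|t']] [ha' hb' hn' [ht' hba' hbG'] hiii'] //.
  rewrite !gseqE /= in hn' hba' hbG' hiii'.
  have NoS' := iii_nosol al be n a' b' t'.+1 hal hco hb' hbG' hn' hiii'.
  have hiw' : is_walk_index al be n b' a' t'.+3.
    by apply: iwi => //; rewrite walkSS hn'; ring.
  have le1 : (t'.+3 <= v.+3)%N := hsn.2 b' a' t'.+3 hb' ha' hiw'.
  have le2 : (v.+3 <= t'.+3)%N.
    rewrite leqNgt; apply/negP => hlt.
    exact: (no_higher al be n t'.+3 hal NoS' a1 a2 v.+3 h1 h2 hlt hw0).
  have tv : t' = v by apply/eqP; rewrite -eqSS -eqSS -eqSS eqn_leq le1 le2.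
  subst t'.
  rewrite -/G1 -/Gt in hn' hbG'.
  have [j [hj1 hj2]] : exists j : int, b' - b = j * Gt /\ a' = a - j * be%:Z * G1.
    by apply: cong_b => //; rewrite -hnab hn'.
  have j0 : j = 0 by nia.
  rewrite j0 !mul0r subr0 in hj2; rewrite j0 mul0r in hj1.
  split => //; apply/eqP; rewrite -subr_eq0; exact/eqP.
split.
  by split => //; split => //; split => //; exists v.+3; split.
split.
  have := real_part R al be n a b v.+1 hal hbe ha hb hbG hba hnab.
  by cbv zeta.
split.
  move=> b' a' hb' ha'; split.
    move=> [_ [_ [s0 [hs0 hiw0]]]].
    have e := sn_uniq al be n _ _ hs0 hsn; subst s0.
    have [_ [hw' _]] := hiw0.
    rewrite walkSS -/G1 -/Gt in hw'.
    have [j [hj1 hj2]] : exists j : int, b' - b = j * Gt /\ a' = a - j * be%:Z * G1.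
      by apply: cong_b => //; rewrite -hnab hw'.
    have j0 : 0 <= j by nia.
    exists `|j|%N; rewrite gez0_abs //; split => //.
    by rewrite -hj1; ring.
  move=> [k [eb ea]]; split => //; split => //; exists v.+3; split => //.
  by apply: iwi => //; rewrite walkSS -/G1 -/Gt hnab eb ea; ring.
move=> b' a' k hb' ha' -> ->.
rewrite !walkSS -/Gt -/G3.
have C := cassini al be v.+1; rewrite -/G1 -/Gt -/G3 in C.
have -> : (a - k%:Z * be%:Z * G1) * G3 + be%:Z * (b + k%:Z * Gt) * Gt -
   (a * G3 + be%:Z * b * Gt) = k%:Z * be%:Z * (Gt ^+ 2 - G1 * G3) by ring.
rewrite C [(- _) ^+ v.+2]exprS; ring.
Qed.
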